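(* Let $G=(V,E)$ be a graph of goods and let $n\ge 1$ agents be given with utility functions on $G$. If all agents except at most one are of the same type, then an mms-allocation of the goods of $G$ to the $n$ agents exists.
   Context: A graph of goods is a finite connected graph $G=(V,E)$ whose vertices are goods. A utility function on $G$ assigns a non-negative real number to each good and is extended additively to sets: $u(X)=\sum_{v\in X}u(v)$. A $G$-bundle is a subset of $V$ that induces a connected subgraph of $G$ (the empty set is also allowed as a bundle). An $n$-split of $G$ is a sequence $P_1,\dots,P_n$ of pairwise disjoint $G$-bundles (possibly empty) whose union is $V$. The maximin share is $\mathrm{mms}^{(n)}(G,u)=\max_{P_1,\dots,P_n}\min_{i} u(P_i)$, the maximum taken over all $n$-splits of $G$. Given agents $1,\dots,n$ with utility functions $u_1,\dots,u_n$, an allocation is an $n$-split $P_1,\dots,P_n$ where $P_i$ is given to agent $i$; it is an mms-allocation if $u_i(P_i)\ge \mathrm{mms}^{(n)}(G,u_i)$ for all $i$ ($n$ being the number of agents). Two agents are of the same type if they have the same utility function. *)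

(* Defs.v *)
From HB Require Import structures.
From mathcomp Require Import all_boot all_order all_algebra.
Set Implicit Arguments. Unset Strict Implicit. Unset Printing Implicit Defensive.
Import Order.TTheory GRing.Theory Num.Theory.
Local Open Scope ring_scope.

Definition graph_of_goods (V : finType) (e : rel V) : Prop :=
  symmetric e /\ (#|V| > 0)%N /\ (forall x y : V, connect e x y).

Definition induced (V : finType) (e : rel V) (X : {set V}) : rel V :=
  [rel x y | [&& x \in X, y \in X & e x y]].

(* A G-bundle: X induces a connected subgraph (the empty set is allowed). *)
Definition bundle (V : finType) (e : rel V) (X : {set V}) : bool :=
  [forall x in X, forall y in X, connect (induced e X) x y].

Definition util (R : realFieldType) (V : finType) (u : V -> R) (X : {set V}) : R :=
  \sum_(v in X) u v.

Definition is_split (V : finType) (e : rel V) (n : nat) (P : 'I_n -> {set V}) : bool :=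
  [&& [forall i, bundle e (P i)],
      [forall i, forall j, (i != j) ==> [disjoint P i & P j]] &
      (\bigcup_(i < n) P i == [set: V])].

(* Minimum utility of the parts of P; the neutral element u(V) is an upper
   bound of all u(P i), so for n >= 1 this is exactly min_i u(P i). *)
Definition min_part (R : realFieldType) (V : finType) (u : V -> R) (n : nat)
    (P : 'I_n -> {set V}) : R :=
  \big[Num.min/util u [set: V]]_(i < n) util u (P i).

(* Maximin share: max over all n-splits of min_i u(P i).  The neutral
   element 0 is below every value (utilities are non-negative) and splits exist. *)
Definition mms (R : realFieldType) (V : finType) (e : rel V) (n : nat) (u : V -> R) : R :=
  \big[Num.max/0]_(P : {ffun 'I_n -> {set V}} | is_split e P) min_part u P.

Definition mms_allocation (R : realFieldType) (V : finType) (e : rel V) (n : nat)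
    (u : 'I_n -> V -> R) (P : 'I_n -> {set V}) : Prop :=
  is_split e P /\ forall i, util (u i) (P i) >= mms e n (u i).

(* Main.v *)
Require Import Defs.
From HB Require Import structures.
From mathcomp Require Import all_boot all_order all_algebra.
From mathcomp Require Import fingroup perm.
Import Order.TTheory GRing.Theory Num.Theory.
Local Open Scope ring_scope.

Lemma split_sum (R : realFieldType) (V : finType) (e : rel V) (n : nat)
  (u : V -> R) (P : 'I_n -> {set V}) :
  is_split e P -> \sum_i util u (P i) = util u [set: V].
Proof.
case/and3P=> _ /forallP Hd /eqP Hc.
rewrite /util -Hc partition_disjoint_bigcup //.
by move=> i j ij; have /forallP := Hd i => /(_ j) /implyP; apply.
Qed.

Lemma mms_le_avg (R : realFieldType) (V : finType) (e : rel V) (n : nat)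
  (u : V -> R) : (0 < n)%N -> (forall v, 0 <= u v) ->
  mms e n u * n%:R <= util u [set: V].
Proof.
move=> n0 u0.
have nR : 0 < (n%:R : R) by rewrite ltr0n.
rewrite -ler_pdivlMr //.
apply/bigmax_leP; split.
  by apply: divr_ge0; [apply: sumr_ge0 => v _; exact: u0 | exact: ltW].
move=> P HP; rewrite ler_pdivlMr //.
rewrite -(@split_sum _ _ _ _ u _ HP).
have -> : min_part u P * n%:R = \sum_(i < n) min_part u P.
  by rewrite sumr_const card_ord mulr_natr.
apply: ler_sum => i _; exact: bigmin_le.
Qed.

Theorem proposition2p1 (R : realFieldType) (V : finType) (e : rel V) (n : nat)
  (u : 'I_n -> V -> R) :
  graph_of_goods e ->
  (0 < n)%N ->
  (forall i v, 0 <= u i v) ->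
  (exists (j : 'I_n) (u0 : V -> R), forall i, i != j -> u i = u0) ->
  exists P : 'I_n -> {set V}, mms_allocation e u P.
Proof.
move=> [_ [_ conn]] n0 upos [j [u0 Hu]].
pose P0 : {ffun 'I_n -> {set V}} := [ffun i => if i == j then [set: V] else set0].
have HP0 : is_split e P0.
  apply/and3P; split.
  - apply/forallP => i; rewrite ffunE; case: (i == j).
      apply/forallP => x; apply/implyP => _; apply/forallP => y; apply/implyP => _.
      rewrite (@eq_connect _ _ e) //.
      by move=> a b; rewrite /induced /= !in_setT.
    by apply/forallP => x; rewrite in_set0.
  - apply/forallP => i; apply/forallP => i'; apply/implyP => ii'.
    rewrite !ffunE; case: (eqVneq i j) => [eij|_]; last by rewrite disjoints_subset sub0set.
    subst i; case: (eqVneq i' j) => [eij|_]; last by rewrite disjoints_subset setC0 subsetT.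
    by subst i'; rewrite eqxx in ii'.
  - apply/eqP/setP => v; rewrite in_setT; apply/bigcupP; exists j => //.
    by rewrite ffunE eqxx in_setT.
pose Ps := [arg max_(P > P0 | is_split e P) min_part u0 P]%O.
have [HPs Psmax] : is_split e Ps /\ forall Q : {ffun 'I_n -> {set V}}, is_split e Q -> min_part u0 Q <= min_part u0 Ps.
  rewrite /Ps; case: (@arg_maxP _ _ _ P0 (fun P => is_split e P) (fun P => min_part u0 P) HP0).
  by move=> P HP Hmax; split => // Q HQ; exact: Hmax.
pose k := [arg max_(k > j) util (u j) (Ps k)]%O.
have kmax : forall i, util (u j) (Ps i) <= util (u j) (Ps k).
  rewrite /k; case: (@arg_maxP _ _ _ j predT (fun k => util (u j) (Ps k)) isT).
  by move=> i _ H i'; exact: H.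
pose s := tperm j k.
exists (fun i => Ps (s i)); split.
  case/and3P: HPs => /forallP Hb /forallP Hd /eqP Hc.
  apply/and3P; split.
  - by apply/forallP => i; apply: Hb.
  - apply/forallP => i; apply/forallP => i'; apply/implyP => ii'.
    have /forallP := Hd (s i) => /(_ (s i')) /implyP; apply.
    by apply: contra ii' => /eqP /perm_inj ->.
  - apply/eqP/setP => v; rewrite in_setT.
    have : v \in \bigcup_i Ps i by rewrite Hc in_setT.
    case/bigcupP => i _ Hv; apply/bigcupP; exists (s^-1 i)%g => //.
    by rewrite permKV.
move=> i /=; case: (eqVneq i j) => [->|ij].
  rewrite /s tpermL.
  have nR : 0 < (n%:R : R) by rewrite ltr0n.
  apply: (le_trans (y := util (u j) [set: V] / n%:R)).
    by rewrite ler_pdivlMr // mms_le_avg.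
  rewrite ler_pdivrMr // -(@split_sum _ _ _ _ (u j) _ HPs).
  have -> : util (u j) (Ps k) * n%:R = \sum_(i < n) util (u j) (Ps k).
    by rewrite sumr_const card_ord mulr_natr.
  by apply: ler_sum => i' _; exact: kmax.
rewrite (Hu i ij).
apply/bigmax_leP; split.
  by apply: sumr_ge0 => v _; rewrite -(Hu i ij); exact: upos.
move=> Q HQ; apply: (le_trans (Psmax Q HQ)); exact: bigmin_le.
Qed.
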